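(* Let $0<q<1$, let $n$ be a positive integer and let $s_1,\dots,s_n$ be real numbers with $s_k>1$ for all $k$. Then \[ \prod_{k=1}^n \zeta[s_k] = \sum_{m=1}^n \sum_{(P_1,\dots,P_m)} \sum_{\nu_1=0}^{|P_1|-1}\cdots\sum_{\nu_m=0}^{|P_m|-1} \zeta\Big[p_1-\nu_1,\,p_2-\nu_2,\,\dots,\,p_m-\nu_m\Big]\prod_{j=1}^m \binom{|P_j|-1}{\nu_j}(1-q)^{\nu_j}, \] where the middle sum runs over all ordered set partitions $(P_1,\dots,P_m)$ of $\{1,\dots,n\}$ into exactly $m$ blocks, and $p_j:=\sum_{i\in P_j}s_i$.
   Context: Fix $0<q<1$. For real $x$, $[x]_q := (1-q^x)/(1-q)$. For an integer $m\ge1$ and real $s_1,\dots,s_m$ with $s_1>1$ and $s_j\ge1$ for $j\ge2$, the multiple $q$-zeta function is $\zeta[s_1,\dots,s_m] := \sum_{k_1>\cdots>k_m>0}\prod_{j=1}^m q^{(s_j-1)k_j}/[k_j]_q^{s_j}$ (sum over positive integers). An ordered set partition of a finite set $S$ into $m$ blocks is an $m$-tuple $(P_1,\dots,P_m)$ of pairwise disjoint non-empty subsets of $S$ whose union is $S$. *)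

(* Defs.v *)
From HB Require Import structures.
From mathcomp Require Import all_boot all_order all_algebra.
From mathcomp Require Import all_classical all_reals all_analysis.
Set Implicit Arguments. Unset Strict Implicit. Unset Printing Implicit Defensive.
Import Order.TTheory GRing.Theory Num.Theory numFieldNormedType.Exports.
Local Open Scope ring_scope.

Definition qnum {R : realType} (q x : R) : R := (1 - q `^ x) / (1 - q).

Definition qterm {R : realType} (q s : R) (k : nat) : R :=
  q `^ ((s - 1) * k%:R) / (qnum q k%:R) `^ s.

(* Truncated multiple q-zeta sum:
   qzeta_trunc q [:: s_1; ...; s_m] N
     = sum over N >= k_1 > k_2 > ... > k_m > 0 of prod_j qterm q s_j k_j
   (empty list gives 1). *)
Fixpoint qzeta_trunc {R : realType} (q : R) (s : seq R) (N : nat) : R :=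
  match s with
  | [::] => 1
  | s1 :: s' => \sum_(1 <= k < N.+1) qterm q s1 k * qzeta_trunc q s' k.-1
  end.

Definition qzeta {R : realType} (q : R) (s : seq R) : R :=
  limn (fun N => qzeta_trunc q s N).

Definition ordered_set_partition (n m : nat) (P : {ffun 'I_m -> {set 'I_n}}) : bool :=
  [&& [forall j, P j != finset.set0],
      [forall i, forall j, (i != j) ==> [disjoint P i & P j]] &
      [forall x, exists j, x \in P j]].

(* Main.v *)
Require Import Defs.
From HB Require Import structures.
From mathcomp Require Import all_boot all_order all_algebra.
From mathcomp Require Import all_classical all_reals all_analysis.
From mathcomp Require Import ring lra zify.
Import Order.TTheory GRing.Theory Num.Theory numFieldNormedType.Exports.
Local Open Scope ring_scope.
Module M_A.
Set Implicit Arguments. Unset Strict Implicit. Unset Printing Implicit Defensive.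

Section Fcons.
Variable (T : finType).
Definition fcons m (x : T) (g : {ffun 'I_m -> T}) : {ffun 'I_m.+1 -> T} :=
  [ffun j => if unlift ord0 j is Some j' then g j' else x].
Lemma fcons0 m x g : @fcons m x g ord0 = x.
Proof. by rewrite ffunE unlift_none. Qed.
Lemma fconsS m x g j : @fcons m x g (lift ord0 j) = g j.
Proof. by rewrite ffunE liftK. Qed.
Definition ftail m (f : {ffun 'I_m.+1 -> T}) : {ffun 'I_m -> T} := [ffun j => f (lift ord0 j)].

Lemma sum_fcons (R : nmodType) m (Pr : pred {ffun 'I_m.+1 -> T}) (F : {ffun 'I_m.+1 -> T} -> R) :
  \sum_(f | Pr f) F f = \sum_x \sum_(g | Pr (fcons x g)) F (fcons x g).
Proof.
rewrite pair_big_dep /=.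
rewrite (reindex (fun p : T * {ffun 'I_m -> T} => fcons p.1 p.2)) //=.
exists (fun f : {ffun 'I_m.+1 -> T} => (f ord0, ftail f)) => [[x g] _|f _] /=.
  rewrite fcons0; congr pair; apply/ffunP => j; by rewrite ffunE fconsS.
apply/ffunP => j; rewrite ffunE; case: unliftP => [j' ->|->] //.
by rewrite ffunE.
Qed.
End Fcons.

Lemma forallS m (F : pred 'I_m.+1) : [forall j, F j] = F ord0 && [forall j : 'I_m, F (lift ord0 j)].
Proof.
apply/forallP/andP => [H|[H0 /forallP H] j]; first by split=> //; apply/forallP.
by case: (unliftP ord0 j) => [j' ->|->].
Qed.

Lemma existsS m (F : pred 'I_m.+1) : [exists j, F j] = F ord0 || [exists j : 'I_m, F (lift ord0 j)].
Proof.
apply/existsP/orP => [[j]|[H|/existsP[j H]]]; last by exists (lift ord0 j).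
  by case: (unliftP ord0 j) => [j' ->|->] H; [right; apply/existsP; exists j'|left].
by exists ord0.
Qed.

Lemma sum_and (R : nmodType) (I J : finType) (a : pred I) (b : pred J) (F : I -> J -> R) :
  \sum_i \sum_(j | a i && b j) F i j = \sum_(i | a i) \sum_(j | b j) F i j.
Proof.
rewrite [RHS]big_mkcond; apply: eq_bigr => i _; case: (a i) => //=.
by rewrite big_pred0.
Qed.

End M_A.
Import M_A.

Module M_B.
Set Implicit Arguments. Unset Strict Implicit. Unset Printing Implicit Defensive.

Section Osp.
Variable n : nat.
Definition osp (A : {set 'I_n}) m (P : {ffun 'I_m -> {set 'I_n}}) : bool :=
  [&& [forall j, P j != finset.set0], [forall i, forall j, (i != j) ==> [disjoint P i & P j]] &
      [forall x, (x \in A) == [exists j, x \in P j]]].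

Lemma osp_fcons A m (S : {set 'I_n}) (P : {ffun 'I_m -> {set 'I_n}}) :
  osp A (fcons S P) = [&& S != finset.set0, S \subset A & osp (A :\: S) P].
Proof.
rewrite /osp forallS fcons0 -andbA; congr andb.
apply/idP/idP.
- case/and3P=> ne /forallP dj /forallP cv.
  have dS j : [disjoint S & P j].
    have := forallP (dj ord0) (lift ord0 j); rewrite fcons0 fconsS.
    by move/implyP; apply; exact: neq_lift.
  have dP i j : i != j -> [disjoint P i & P j].
    move=> ij; have := forallP (dj (lift ord0 i)) (lift ord0 j).
    by rewrite !fconsS (inj_eq (@lift_inj _ ord0)) ij.
  apply/and4P; split => //.
  + apply/fintype.subsetP => x xS; rewrite (eqP (cv x)); apply/existsP; exists ord0.
    by rewrite fcons0.
  + by apply/forallP => j; have := forallP ne j; rewrite fconsS.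
  + apply/forallP => i; apply/forallP => j; apply/implyP; exact: dP.
  + apply/forallP => x; rewrite finset.in_setD (eqP (cv x)) existsS fcons0.
    have -> : [exists j, x \in fcons S P (lift ord0 j)] = [exists j, x \in P j].
      by apply: eq_existsb => j; rewrite fconsS.
    case xS: (x \in S) => //=; rewrite ?orbF ?orbT //=.
    rewrite eq_sym eqbF_neg; apply/existsP => -[j xPj].
    by move/disjointFr: (dS j) => /(_ x xS); rewrite xPj.
- case/and4P=> sSA ne /forallP dP /forallP cv.
  have dS j : [disjoint S & P j].
    rewrite disjoint_subset; apply/fintype.subsetP => x xS; rewrite inE; apply/negP => xP.
    have := cv x; rewrite finset.in_setD xS /= => /eqP E.
    have : [exists j, x \in P j] by apply/existsP; exists j.
    by rewrite -E.
  apply/and3P; split => //.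
  + by apply/forallP => j; rewrite fconsS; exact: (forallP ne).
  + apply/forallP => i; apply/forallP => j; apply/implyP.
    case: (unliftP ord0 i) => [i' ->|->]; case: (unliftP ord0 j) => [j' ->|->];
      rewrite ?fcons0 ?fconsS => ij.
    * rewrite (inj_eq (@lift_inj _ ord0)) in ij.
      by have := forallP (dP i') j'; rewrite ij.
    * by rewrite disjoint_sym.
    * exact: dS.
    * by rewrite eqxx in ij.
  + apply/forallP => x; rewrite existsS fcons0.
    have -> : [exists j, x \in fcons S P (lift ord0 j)] = [exists j, x \in P j].
      by apply: eq_existsb => j; rewrite fconsS.
    have := cv x; rewrite finset.in_setD => /eqP <-.
    by case xS: (x \in S); rewrite //= ?andbT ?(fintype.subsetP sSA).
Qed.
End Osp.

End M_B.
Import M_B.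

Module M_C.
Set Implicit Arguments. Unset Strict Implicit. Unset Printing Implicit Defensive.

Section Analytic.
Variable R : realType.
Variable q : R.
Hypothesis q0 : 0 < q.
Hypothesis q1 : q < 1.

Lemma qnumE k : qnum q k%:R = (1 - q ^+ k) / (1 - q).
Proof. by rewrite /qnum (powR_mulrn _ (ltW q0)). Qed.

Lemma qnum_gt0 k : (0 < k)%N -> 0 < qnum q k%:R.
Proof.
move=> k0; rewrite qnumE divr_gt0 ?subr_gt0 //.
by rewrite exprn_ilt1 // ?ltW // -lt0n.
Qed.

Lemma qnum_ge1 k : (0 < k)%N -> 1 <= qnum q k%:R.
Proof.
case: k => // k _; rewrite qnumE ler_pdivlMr ?subr_gt0 // mul1r; apply: lerB => //.
by rewrite exprS ler_piMr ?exprn_ile1 // ltW.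
Qed.

Lemma qtermE x k : qterm q x k = (q ^+ k) `^ (x - 1) / (qnum q k%:R) `^ x.
Proof. by rewrite /qterm [(x - 1) * _]mulrC powRrM (powR_mulrn _ (ltW q0)). Qed.

Lemma qterm_ge0 x k : 0 <= qterm q x k.
Proof. by rewrite /qterm divr_ge0 // powR_ge0. Qed.

Lemma prod_powR (I : finType) (S : {pred I}) (a : R) (f : I -> R) : 0 < a ->
  \prod_(i in S) a `^ f i = a `^ (\sum_(i in S) f i).
Proof.
move=> a0; apply/esym.
apply: (big_morph (fun y => a `^ y)) => [y z|]; last exact: powRr0.
by rewrite powRD // (gt_eqF a0) implybT.
Qed.

Lemma block (I : finType) (S : {set I}) (s : I -> R) k : (0 < k)%N -> S != finset.set0 ->
  \sum_(nu < #|S|) qterm q (\sum_(i in S) s i - nu%:R) k * ('C(#|S|.-1, nu)%:R * (1 - q) ^+ nu)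
  = \prod_(i in S) qterm q (s i) k.
Proof.
move=> k0 S0.
set u := q ^+ k; set c := qnum q k%:R; set p := \sum_(i in S) s i.
have u0 : 0 < u by rewrite exprn_gt0.
have c0 : 0 < c by exact: qnum_gt0.
have cu : c * (1 - q) = 1 - u by rewrite /c qnumE divfK // subr_eq0 gt_eqF.
have RHS : \prod_(i in S) qterm q (s i) k = u `^ (p - #|S|%:R) / c `^ p.
  under eq_bigr do rewrite qtermE.
  rewrite prodf_div !prod_powR //; congr (_ `^ _ / _).
  by rewrite sumrB sumr_const.
rewrite RHS; under eq_bigr do rewrite qtermE -/u -/c.
clearbody u c p.
have : (0 < #|S|)%N by rewrite card_gt0.
case Sr: #|S| => [//|r] _ /=.
transitivity (u `^ (p - r.+1%:R) / c `^ p * (u + (1 - u)) ^+ r); last first.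
  have -> : u + (1 - u) = 1 by ring.
  by rewrite expr1n mulr1.
rewrite exprDn mulr_sumr; apply: eq_bigr => nu _.
have nur : (nu <= r)%N by rewrite -ltnS.
have -> : p - nu%:R - 1 = (p - r.+1%:R) + (r - nu)%N%:R.
  by rewrite natrB // mulrS; ring.
rewrite powRD ?(gt_eqF u0) ?implybT // (powR_mulrn _ (ltW u0)).
rewrite (@powRB _ c p nu%:R) ?(gt_eqF c0) ?implybT // (powR_mulrn _ (ltW c0)) -cu.
rewrite -mulr_natr exprMn; field.
by rewrite !gt_eqF // ?powR_gt0 ?exprn_gt0.
Qed.
End Analytic.

End M_C.
Import M_C.

Module M_D.
Set Implicit Arguments. Unset Strict Implicit. Unset Printing Implicit Defensive.

Lemma sum_and2 (R : nmodType) (I J : finType) (a : pred I) (b : I -> pred J) (F : I -> J -> R) :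
  \sum_i \sum_(j | a i && b i j) F i j = \sum_(i | a i) \sum_(j | b i j) F i j.
Proof.
rewrite [RHS]big_mkcond; apply: eq_bigr => i _; case: (a i) => //=.
by rewrite big_pred0.
Qed.

Lemma prod_split_sub (R : comRingType) (I : finType) (A : {set I}) (a b : I -> R) :
  \prod_(k in A) (a k + b k) =
  \sum_(S : {set I} | S \subset A) (\prod_(k in S) a k) * \prod_(k in A :\: S) b k.
Proof.
pose F k := if k \in A then a k else 0.
pose G k := if k \in A then b k else 1.
rewrite big_mkcond /=.
rewrite (eq_bigr (fun k => F k + G k)); last first.
  by move=> k _; rewrite /F /G; case: (k \in A); rewrite ?add0r.
rewrite bigA_distr [RHS]big_mkcond /=; apply: eq_bigr => J _.
case: ifPn => sJA.
  rewrite (bigID (fun k => k \in J)) /=; congr (_ * _).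
    rewrite [LHS]big_mkcond [RHS]big_mkcond /=; apply: eq_bigr => k _.
    by case kJ: (k \in J) => //; rewrite /F (fintype.subsetP sJA _ kJ).
  rewrite [LHS]big_mkcond [RHS]big_mkcond /=; apply: eq_bigr => k _.
  by rewrite finset.in_setD /G; case: (k \in J); case: (k \in A).
have [k kJ kA] : exists2 k, k \in J & k \notin A.
  case/subsetPn: sJA => k; by exists k.
rewrite (bigD1 k) //= kJ /F (negbTE kA) mul0r //.
Qed.

Lemma ord0F (j : 'I_0) : False. Proof. by case: j. Qed.

Lemma ffun0_eq (T : finType) (f g : {ffun 'I_0 -> T}) : f = g.
Proof. by apply/ffunP => -[]. Qed.

Section Main.
Variable R : realType.
Variable q : R.
Hypothesis q0 : 0 < q.
Hypothesis q1 : q < 1.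
Variable n : nat.
Variable s : 'I_n -> R.

Local Notation Z := (qzeta_trunc q).

Definition Lst m (P : {ffun 'I_m -> {set 'I_n}}) (nu : {ffun 'I_m -> 'I_n}) : seq R :=
  [seq (\sum_(i in P j) s i) - (nu j)%:R | j <- enum 'I_m].
Definition Cf m (P : {ffun 'I_m -> {set 'I_n}}) (nu : {ffun 'I_m -> 'I_n}) : R :=
  \prod_(j < m) ('C(#|P j|.-1, nu j)%:R * (1 - q) ^+ nu j).
Definition RHSm (A : {set 'I_n}) N m :=
  \sum_(P : {ffun 'I_m -> {set 'I_n}} | osp A P)
    \sum_(nu : {ffun 'I_m -> 'I_n} | [forall j, (nu j < #|P j|)%N])
      Z (Lst P nu) N * Cf P nu.

Lemma Lst_fcons m S (P : {ffun 'I_m -> {set 'I_n}}) (v : 'I_n) nu :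
  Lst (fcons S P) (fcons v nu) = (\sum_(i in S) s i - v%:R) :: Lst P nu.
Proof.
rewrite /Lst enum_ordSl /= !fcons0; congr cons.
by rewrite -map_comp; apply: eq_map => j /=; rewrite !fconsS.
Qed.

Lemma Cf_fcons m S (P : {ffun 'I_m -> {set 'I_n}}) (v : 'I_n) nu :
  Cf (fcons S P) (fcons v nu) = ('C(#|S|.-1, v)%:R * (1 - q) ^+ v) * Cf P nu.
Proof.
rewrite /Cf big_ord_recl !fcons0; congr (_ * _).
by apply: eq_bigr => j _; rewrite !fconsS.
Qed.

Lemma RHSm_cons A N m : RHSm A N m.+1 =
  \sum_(S : {set 'I_n}) \sum_(P : {ffun 'I_m -> {set 'I_n}} | [&& S != finset.set0, S \subset A & osp (A :\: S) P])
    \sum_(v : 'I_n | (v < #|S|)%N) \sum_(nu : {ffun 'I_m -> 'I_n} | [forall j, (nu j < #|P j|)%N])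
      Z ((\sum_(i in S) s i - v%:R) :: Lst P nu) N * (('C(#|S|.-1, v)%:R * (1 - q) ^+ v) * Cf P nu).
Proof.
rewrite /RHSm sum_fcons; apply: eq_bigr => S _.
rewrite (eq_bigl (fun P : {ffun 'I_m -> {set 'I_n}} => [&& S != finset.set0, S \subset A & osp (A :\: S) P])); last first.
  by move=> P; rewrite osp_fcons.
apply: eq_bigr => P _; rewrite sum_fcons.
rewrite -sum_and; apply: eq_bigr => v _.
rewrite (eq_bigl (fun nu : {ffun 'I_m -> 'I_n} => (v < #|S|)%N && [forall j, (nu j < #|P j|)%N])); last first.
  move=> nu; rewrite forallS !fcons0; congr andb.
  by apply: eq_forallb => j; rewrite !fconsS.
by apply: eq_bigr => nu _; rewrite Lst_fcons Cf_fcons.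
Qed.

Lemma RHSm0 A N : RHSm A N 0 = (A == finset.set0)%:R.
Proof.
pose P0 : {ffun 'I_0 -> {set 'I_n}} := [ffun j => finset.set0].
pose nu0 : {ffun 'I_0 -> 'I_n} := [ffun j : 'I_0 => False_rect 'I_n (ord0F j)].
have ospE (P : {ffun 'I_0 -> {set 'I_n}}) : osp A P = (A == finset.set0).
  rewrite /osp; have -> : [forall j, P j != finset.set0] by apply/forallP => j; case: (ord0F j).
  have -> : [forall i, forall j, (i != j) ==> [disjoint P i & P j]] by apply/forallP => j; case: (ord0F j).
  rewrite /=; apply/forallP/eqP => [H|->].
    apply/finset.setP => x; rewrite finset.in_set0; have := H x.
    by case: (x \in A) => //; move/eqP/esym/existsP => -[j]; case: (ord0F j).
  move=> x; rewrite finset.in_set0; apply/eqP/esym/negbTE/existsP => -[j]; case: (ord0F j).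
rewrite /RHSm; case: eqP => A0 /=.
  rewrite (big_pred1 P0); last by move=> P; rewrite /= ospE A0 eqxx (ffun0_eq P P0) eqxx.
  rewrite (big_pred1 nu0); last first.
    by move=> nu; rewrite /= (ffun0_eq nu nu0) eqxx; apply/forallP => j; case: (ord0F j).
  by rewrite /Lst /Cf big_ord0 mulr1 enum_ord0.
rewrite big_pred0 // => P; rewrite ospE; exact/eqP.
Qed.

Lemma Z_nil N : Z [::] N = 1. Proof. by []. Qed.
Lemma Z_cons_S x L N : Z (x :: L) N.+1 = Z (x :: L) N + qterm q x N.+1 * Z L N.
Proof. by rewrite /= big_nat_recr. Qed.
Lemma Z_cons_0 x L : Z (x :: L) 0 = 0.
Proof. by rewrite /= big_geq. Qed.

Lemma block_nu (S : {set 'I_n}) k : (0 < k)%N -> S != finset.set0 ->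
  \sum_(v : 'I_n | (v < #|S|)%N) qterm q (\sum_(i in S) s i - v%:R) k * ('C(#|S|.-1, v)%:R * (1 - q) ^+ v)
  = \prod_(i in S) qterm q (s i) k.
Proof.
move=> k0 S0; rewrite -block //.
rewrite (big_ord_widen n (fun v : nat => qterm q (\sum_(i in S) s i - v%:R) k * ('C(#|S|.-1, v)%:R * (1 - q) ^+ v))) //.
by rewrite -[X in (_ <= X)%N](card_ord n) max_card.
Qed.

Lemma RHSm_step A N m : RHSm A N.+1 m.+1 = RHSm A N m.+1 +
  \sum_(S : {set 'I_n} | (S != finset.set0) && (S \subset A))
     (\prod_(i in S) qterm q (s i) N.+1) * RHSm (A :\: S) N m.
Proof.
rewrite !RHSm_cons.
under eq_bigr => S _.
  under eq_bigr => P _.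
    under eq_bigr => v _.
      under eq_bigr => nu _ do rewrite Z_cons_S mulrDl.
      rewrite big_split.
    over.
    rewrite big_split.
  over.
  rewrite big_split.
over.
rewrite big_split /=; congr (_ + _).
rewrite (eq_bigr (fun S => \sum_(P : {ffun 'I_m -> {set 'I_n}} | ((S != finset.set0) && (S \subset A)) && osp (A :\: S) P)
    \sum_(v : 'I_n | (v < #|S|)%N) \sum_(nu : {ffun 'I_m -> 'I_n} | [forall j, (nu j < #|P j|)%N])
      qterm q (\sum_(i in S) s i - v%:R) N.+1 * Z (Lst P nu) N * ('C(#|S|.-1, v)%:R * (1 - q) ^+ v * Cf P nu))); last first.
  by move=> S _; apply: eq_bigl => P; rewrite andbA.
rewrite sum_and2; apply: eq_bigr => S /andP[S0 SA].
rewrite /RHSm big_distrr; apply: eq_bigr => P _.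
rewrite -(block_nu _ S0) // big_distrlr; apply: eq_bigr => v _.
by apply: eq_bigr => nu _; rewrite [RHS]mulrACA.
Qed.

Lemma finite_id N : forall (A : {set 'I_n}) M, (#|A| < M)%N ->
  \prod_(k in A) Z [:: s k] N = \sum_(0 <= m < M) RHSm A N m.
Proof.
elim: N => [|N IH] A [//|M] AM.
  rewrite big_nat_recl // RHSm0 [X in _ + X]big1 ?addr0; last first.
    move=> m _; rewrite RHSm_cons; apply: big1 => S _; apply: big1 => P _.
    apply: big1 => v _; apply: big1 => nu _.
    by rewrite Z_cons_0 mul0r.
  case: eqP => [->|/eqP A0]; first by rewrite finset.big_set0.
  have [k kA] := set0Pn _ A0.
  by rewrite (bigD1 k) //= big_geq // mul0r.
transitivity (\prod_(k in A) (qterm q (s k) N.+1 + Z [:: s k] N)).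
  by apply: eq_bigr => k _; rewrite Z_cons_S Z_nil mulr1 addrC.
rewrite prod_split_sub (bigD1 finset.set0) ?finset.sub0set //= finset.big_set0 mul1r finset.setD0.
rewrite (IH A M.+1 AM) !big_nat_recl // !RHSm0 -addrA; congr (_ + _).
under [in RHS]eq_bigr do rewrite RHSm_step.
rewrite big_split /=; congr (_ + _).
rewrite exchange_big /=.
rewrite (eq_bigl (fun S : {set 'I_n} => (S != finset.set0) && (S \subset A))); last first.
  by move=> S; rewrite andbC.
apply: eq_bigr => S /andP[S0 SA].
rewrite -big_distrr /=; congr (_ * _).
have c1 : (0 < #|S|)%N by rewrite card_gt0.
have c2 : (#|S| <= #|A|)%N by apply: subset_leq_card.
rewrite (IH (A :\: S) M); last by rewrite cardsDS //; lia.
by [].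
Qed.
End Main.

End M_D.
Import M_D.

Module M_E.
Set Implicit Arguments. Unset Strict Implicit. Unset Printing Implicit Defensive.

Section Lim.
Local Open Scope classical_set_scope.
Variable R : realType.

Lemma cvg_sum_seq (I : Type) (r : seq I) (P : pred I) (u : I -> nat -> R) (l : I -> R) :
  (forall i, P i -> u i @ \oo --> l i) ->
  (fun N => \sum_(i <- r | P i) u i N) @ \oo --> \sum_(i <- r | P i) l i.
Proof.
move=> h; elim: r => [|i r IH].
  rewrite big_nil; under eq_fun do rewrite big_nil; exact: cvg_cst.
rewrite big_cons; under eq_fun do rewrite big_cons.
case Pi: (P i) => //; exact: cvgD (h _ Pi) IH.
Qed.

Lemma cvg_prod_seq (I : Type) (r : seq I) (P : pred I) (u : I -> nat -> R) (l : I -> R) :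
  (forall i, P i -> u i @ \oo --> l i) ->
  (fun N => \prod_(i <- r | P i) u i N) @ \oo --> \prod_(i <- r | P i) l i.
Proof.
move=> h; elim: r => [|i r IH].
  rewrite big_nil; under eq_fun do rewrite big_nil; exact: cvg_cst.
rewrite big_cons; under eq_fun do rewrite big_cons.
case Pi: (P i) => //; exact: cvgM (h _ Pi) IH.
Qed.

Variable q : R.
Hypothesis q0 : 0 < q.
Hypothesis q1 : q < 1.
Local Notation Z := (qzeta_trunc q).

Lemma Z_ge0 L N : 0 <= Z L N.
Proof.
elim: L N => [|x L IH] N /=; first exact: ler01.
by apply: sumr_ge0 => k _; apply: mulr_ge0; [exact: qterm_ge0|exact: IH].
Qed.

Lemma Z_incr L N : Z L N <= Z L N.+1.
Proof.
case: L => [|x L] //; rewrite Z_cons_S lerDl mulr_ge0 // ?qterm_ge0 ?Z_ge0 //.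
Qed.

Lemma qterm_le x k : 1 < x -> (0 < k)%N -> qterm q x k <= (q `^ (x - 1)) ^+ k.
Proof.
move=> x1 k0; rewrite /qterm powRrM (powR_mulrn _ (powR_ge0 _ _)).
have c1 := qnum_ge1 q0 q1 k0.
have c0 : 0 < qnum q k%:R `^ x by rewrite powR_gt0 // (lt_le_trans ltr01).
rewrite ler_pdivrMr // ler_peMr // ?powR_ge0 //.
  by rewrite exprn_ge0 // powR_ge0.
apply: (le_trans c1); apply: le1r_powR => //; exact: ltW.
Qed.

Lemma geom_le (r : R) N : 0 <= r -> r < 1 -> \sum_(1 <= k < N.+1) r ^+ k <= (1 - r)^-1.
Proof.
move=> r0 r1.
have : \sum_(0 <= k < N.+1) r ^+ k <= (1 - r)^-1.
  rewrite big_mkord -[(1 - r)^-1]mul1r ler_pdivlMr ?subr_gt0 //.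
  rewrite mulrC -opprB mulNr -subrX1 opprB lerBlDr lerDl.
  exact: exprn_ge0.
rewrite big_ltn // expr0; apply: le_trans; rewrite lerDr; exact: ler01.
Qed.

Lemma Z_bound L : all (fun x => 1 < x) L -> exists B, forall N, Z L N <= B.
Proof.
elim: L => [|x L IH] /=; first by exists 1.
case/andP => x1 /IH [B hB].
have B0 : 0 <= B := le_trans (Z_ge0 L 0) (hB 0).
set r := q `^ (x - 1).
have r0 : 0 <= r := powR_ge0 _ _.
have r1 : r < 1.
  rewrite lt_neqAle powR_eq1 (lt_eqF q1) (lt_gtF q0) subr_eq0 (gt_eqF x1) /=.
  rewrite -[X in _ <= X](powRr0 q) /r; apply: ger_powR; first by rewrite q0 ltW.
  by rewrite subr_ge0 ltW.
exists (B * (1 - r)^-1) => N /=.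
apply: (@le_trans _ _ (\sum_(1 <= k < N.+1) r ^+ k * B)).
  apply: ler_sum_nat => k /andP[k1 _]; apply: ler_pM => //.
  - exact: qterm_ge0.
  - exact: Z_ge0.
  - exact: qterm_le.
rewrite -mulr_suml mulrC ler_wpM2l //; exact: geom_le.
Qed.

Lemma Z_cvg L : all (fun x => 1 < x) L -> Z L @ \oo --> limn (Z L).
Proof.
case/Z_bound => B hB.
have h : Z L @ \oo --> sup (range (Z L)).
  apply: nondecreasing_cvgn; first by apply/nondecreasing_seqP => N; exact: Z_incr.
  by exists B => _ [N _ <-]; exact: hB.
by rewrite (cvg_lim (@Rhausdorff R) h).
Qed.
End Lim.

End M_E.
Import M_E.

Lemma all_gt1 (R : realType) n (s : 'I_n -> R) m (P : {ffun 'I_m -> {set 'I_n}}) (nu : {ffun 'I_m -> 'I_n}) :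
  (forall k, 1 < s k) -> ordered_set_partition P -> [forall j, (nu j < #|P j|)%N] ->
  all (fun x => 1 < x) [seq (\sum_(i in P j) s i) - (nu j)%:R | j <- enum 'I_m].
Proof.
move=> s1 HP Hnu; rewrite all_map; apply/allP => j _ /=.
case/and3P: HP => /forallP ne _ _.
have [i0 i0P] := set0Pn _ (ne j).
have h1 : 0 < \sum_(i in P j) s i - #|P j|%:R.
  have -> : \sum_(i in P j) s i - #|P j|%:R = \sum_(i in P j) (s i - 1).
    by rewrite sumrB sumr_const.
  rewrite (bigD1 i0) //=.
  have a : 0 < s i0 - 1 by rewrite subr_gt0.
  have b : 0 <= \sum_(i in P j | i != i0) (s i - 1).
    by apply: sumr_ge0 => i _; rewrite subr_ge0 ltW.
  lra.
have h2 : (nu j)%:R + 1 <= #|P j|%:R :> R.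
  by rewrite natr1 ler_nat (forallP Hnu j).
lra.
Qed.

Theorem theorem2p2 (R : realType) (q : R) (n : nat) (s : 'I_n -> R) :
  0 < q -> q < 1 -> (0 < n)%N -> (forall k, 1 < s k) ->
  \prod_(k < n) qzeta q [:: s k] =
  \sum_(1 <= m < n.+1)
    \sum_(P : {ffun 'I_m -> {set 'I_n}} | ordered_set_partition P)
      \sum_(nu : {ffun 'I_m -> 'I_n} | [forall j, (nu j < #|P j|)%N])
        qzeta q [seq (\sum_(i in P j) s i) - (nu j)%:R | j <- enum 'I_m]
        * \prod_(j < m) ('C(#|P j|.-1, nu j)%:R * (1 - q) ^+ nu j).
Proof.
move=> q0 q1 n0 s1.
have FI N : \prod_(k < n) qzeta_trunc q [:: s k] N =
  \sum_(1 <= m < n.+1)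
    \sum_(P : {ffun 'I_m -> {set 'I_n}} | ordered_set_partition P)
      \sum_(nu : {ffun 'I_m -> 'I_n} | [forall j, (nu j < #|P j|)%N])
        qzeta_trunc q [seq (\sum_(i in P j) s i) - (nu j)%:R | j <- enum 'I_m] N
        * \prod_(j < m) ('C(#|P j|.-1, nu j)%:R * (1 - q) ^+ nu j).
  have := @finite_id R q q0 q1 n s N [set: 'I_n] n.+1.
  rewrite finset.cardsT card_ord => /(_ (leqnn _)).
  move=> H.
  have -> : \prod_(k < n) qzeta_trunc q [:: s k] N = \prod_(k in [set: 'I_n]) qzeta_trunc q [:: s k] N.
    by apply: eq_bigl => k; rewrite finset.in_setT.
  rewrite H.
  rewrite big_ltn // RHSm0.
  have -> : ([set: 'I_n] == finset.set0) = false.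
    apply/negbTE/set0Pn; exists (Ordinal n0); exact: finset.in_setT.
  rewrite add0r; apply: eq_bigr => m _; rewrite /RHSm.
  apply: eq_bigl => P; rewrite /osp /ordered_set_partition; congr [&& _, _ & _].
  by apply: eq_forallb => x; rewrite finset.in_setT eq_sym eqb_id.
have hL : ((fun N => \prod_(k < n) qzeta_trunc q [:: s k] N) @ \oo --> \prod_(k < n) qzeta q [:: s k])%classic.
  apply: cvg_prod_seq => k _; apply: (Z_cvg q0 q1); by rewrite /= s1.
rewrite -(cvg_lim (@Rhausdorff R) hL).
under eq_fun do rewrite FI.
apply: cvg_lim; first exact: Rhausdorff.
apply: cvg_sum_seq => m _; apply: cvg_sum_seq => P HP; apply: cvg_sum_seq => nu Hnu.
apply: cvgMl; apply: (Z_cvg q0 q1); exact: all_gt1.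
Qed.
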